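(* There exists an integer $g_0$ with the following property. Let $g\ge g_0$ and let $\mathfrak g$ be a semisimple complex Lie algebra with inclusions $\mathfrak{sp}(2g-10)\subset\mathfrak g\subset\mathfrak{sp}(4g-4)$ such that the composite inclusion $\mathfrak{sp}(2g-10)\subset\mathfrak{sp}(4g-4)$ is the linear embedding given by the diagonal action on the direct sum of two copies of the standard representation of $\mathfrak{sp}(2g-10)$ (plus a trivial complement). Suppose that the action of $\mathfrak g$ on $\mathbb C^{4g-4}$ is irreducible, and that $\mathfrak g$ contains an element $A$ which acts on $\mathbb C^{4g-4}$ as a nilpotent endomorphism with exactly one nontrivial Jordan block, that block having size $2$ (i.e. $A$ is nilpotent of rank one). Then $\mathfrak g=\mathfrak{sp}(4g-4)$. *)

(* Defs.v *)
From HB Require Import structures.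
From mathcomp Require Import all_boot all_order all_algebra.
From mathcomp Require Import complex.
From mathcomp Require Import reals.
Set Implicit Arguments. Unset Strict Implicit. Unset Printing Implicit Defensive.
Import Order.TTheory GRing.Theory Num.Theory.
Local Open Scope ring_scope.

Section LieDefs.
Variable K : fieldType.
Variable N : nat.

Definition comm (A B : 'M[K]_N) : 'M[K]_N := A *m B - B *m A.

Definition lie_subalgebra (L : {vspace 'M[K]_N}) : Prop :=
  forall A B, A \in L -> B \in L -> comm A B \in L.

Definition lie_ideal (I L : {vspace 'M[K]_N}) : Prop :=
  (I <= L)%VS /\ forall A B, A \in L -> B \in I -> comm A B \in I.

(* derived algebra [I,I] = span of all brackets (by bilinearity, of brackets of basis elements) *)
Definition derived (I : {vspace 'M[K]_N}) : {vspace 'M[K]_N} :=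
  <<[seq comm a b | a <- vbasis I, b <- vbasis I]>>%VS.

Definition lie_solvable (I : {vspace 'M[K]_N}) : Prop :=
  exists k, iter k derived I = 0%VS.

Definition lie_semisimple (L : {vspace 'M[K]_N}) : Prop :=
  forall I, lie_ideal I L -> lie_solvable I -> I = 0%VS.

Definition irreducible_action (L : {vspace 'M[K]_N}) : Prop :=
  forall U : {vspace 'cV[K]_N},
    (forall A v, A \in L -> v \in U -> A *m v \in U) ->
    U = 0%VS \/ U = fullv.

Definition nilpotent_mx (A : 'M[K]_N) : Prop :=
  exists k, iter k (mulmx A) 1%:M = 0.

(* standard symplectic form J = [[0, I],[-I, 0]] on K^N (N even) *)
Definition Jmat : 'M[K]_N :=
  \matrix_(i < N, j < N) (if (j == i + N./2 :> nat)%N then 1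
                  else if (i == j + N./2 :> nat)%N then -1 else 0).

Definition is_sp (X : 'M[K]_N) : Prop := X^T *m Jmat + Jmat *m X = 0.
End LieDefs.

Definition mxf (K : fieldType) (n : nat) (X : 'M[K]_n) (a b : nat) : K :=
  match (insub a : option 'I_n), (insub b : option 'I_n) with
  | Some i, Some j => X i j
  | _, _ => 0
  end.

(* Decomposition of K^N (N = 2k, basis e_0..e_{k-1}, f_0..f_{k-1} = e_k..e_{2k-1})
   as V (+) V (+) W with V = K^(2m) standard symplectic:
   copy 0 spanned by e_0..e_{m-1}, f_0..f_{m-1};
   copy 1 spanned by e_m..e_{2m-1}, f_m..f_{2m-1};
   W spanned by the remaining basis vectors (trivial complement).
   pos k m i = Some (c, a) : global index i is the local index a of copy c. *)
Definition pos (k m i : nat) : option (bool * nat) :=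
  if (i < k)%N then
    (if (i < m)%N then Some (false, i)
     else if (i < 2 * m)%N then Some (true, (i - m)%N) else None)
  else
    let i' := (i - k)%N in
    if (i' < m)%N then Some (false, (m + i')%N)
    else if (i' < 2 * m)%N then Some (true, i') else None.

(* the embedding sp(2m) -> sp(N): diagonal action on two copies of the standard
   representation, trivial on the complement *)
Definition emb (K : fieldType) (N m : nat) (X : 'M[K]_(2 * m)) : 'M[K]_N :=
  \matrix_(i < N, j < N)
    match pos N./2 m i, pos N./2 m j with
    | Some (c, a), Some (d, b) => if c == d then mxf X a b else 0
    | _, _ => 0
    end.

(* Main.v *)
Require Import Defs.
From HB Require Import structures.
From mathcomp Require Import all_boot all_order all_algebra.
From mathcomp Require Import complex.
From mathcomp Require Import reals.
From Stdlib Require Import Classical.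
From mathcomp Require Import ring zify.
Set Implicit Arguments. Unset Strict Implicit. Unset Printing Implicit Defensive.
Import Order.TTheory GRing.Theory Num.Theory.
Local Open Scope ring_scope.

Section Basic.
Variable (K : numFieldType) (n : nat).
Local Notation N := n.+1.
Local Notation M := 'M[K]_N.
Local Notation V := 'cV[K]_N.
Local Notation J := (Jmat K N).
Hypothesis hJT : J^T = - J.

Definition om (x y : V) : K := (x^T *m J *m y) 0 0.
Definition TT (a b : V) : M := a *m b^T *m J + b *m a^T *m J.

Lemma mx11_mul (a : V) (c : 'M[K]_1) : a *m c = c 0 0 *: a.
Proof. by rewrite {1}[c]mx11_scalar mul_mx_scalar. Qed.

Lemma omA x y : om x y = - om y x.
Proof.
rewrite /om; have -> : (x^T *m J *m y) 0 0 = ((x^T *m J *m y)^T) 0 0 by rewrite [RHS]mxE.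
rewrite !trmx_mul !trmxK hJT. by rewrite mulNmx mulmxN mxE mulmxA.
Qed.

Lemma om_xx x : om x x = 0.
Proof.
have h := omA x x; have : om x x *+ 2 == 0 by rewrite mulr2n {1}h addNr.
by rewrite mulrn_eq0 => /eqP.
Qed.

Lemma spT X : is_sp X -> X^T *m J = - (J *m X).
Proof. by rewrite /is_sp => /eqP; rewrite addr_eq0 => /eqP ->. Qed.

Lemma om_sp X x y : is_sp X -> om (X *m x) y = - om x (X *m y).
Proof.
move=> /spT h; rewrite /om trmx_mul -!mulmxA (mulmxA X^T) h.
by rewrite mulNmx mulmxN mxE !mulmxA.
Qed.

Lemma TT_apply a b x : TT a b *m x = om b x *: a + om a x *: b.
Proof.
by rewrite /TT mulmxDl -!mulmxA !mx11_mul /om !mulmxA.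
Qed.

Lemma TTC a b : TT a b = TT b a.
Proof. by rewrite /TT addrC. Qed.

Lemma TTDl a b c : TT (a + b) c = TT a c + TT b c.
Proof.
rewrite /TT linearD /= !mulmxDl !mulmxDr !mulmxDl.
by rewrite addrACA.
Qed.

Lemma TTZl k a c : TT (k *: a) c = k *: TT a c.
Proof.
by rewrite /TT linearZ /= -!scalemxAl -!scalemxAr -!scalemxAl scalerDr.
Qed.

Lemma TTDr a b c : TT c (a + b) = TT c a + TT c b.
Proof. by rewrite !(TTC c) TTDl. Qed.

Lemma TTZr k a c : TT c (k *: a) = k *: TT c a.
Proof. by rewrite !(TTC c) TTZl. Qed.

Lemma comm_half (X : M) (a b : V) : is_sp X ->
  comm X (a *m b^T *m J) = (X *m a) *m b^T *m J + a *m (X *m b)^T *m J.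
Proof.
move=> /spT h; have hJX : J *m X = - (X^T *m J) by rewrite h opprK.
rewrite /comm -!mulmxA hJX !mulmxN opprK trmx_mul -!mulmxA.
by rewrite !mulmxA.
Qed.

Lemma comm_TT (X : M) (a b : V) : is_sp X -> comm X (TT a b) = TT (X *m a) b + TT a (X *m b).
Proof.
move=> hX; rewrite /TT /comm mulmxDr mulmxDl opprD addrACA.
rewrite -![_ *m _ - _]/(comm _ _) !comm_half //.
by rewrite -!addrA; congr (_ + _); rewrite [X in _ + X = _]addrC addrCA.
Qed.

End Basic.


Lemma vspace_of_pred (K : fieldType) (vT : vectType K) (P : vT -> Prop) :
  P 0 -> (forall k x y, P x -> P y -> P (k *: x + y)) ->
  exists U : {vspace vT}, forall v, v \in U <-> P v.
Proof.
move=> P0 Plin.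
suff: forall d, exists U : {vspace vT}, (forall v, v \in U -> P v) /\
    ((d <= \dim U)%N \/ forall v, P v -> v \in U).
  move=> /(_ (\dim {:vT}).+1) [U [h1 [hd|h2]]].
    by have := dimvS (subvf U); rewrite leqNgt (leq_trans _ hd).
  by exists U; split; [apply: h1| apply: h2].
elim=> [|d [U [h1 h2]]].
  exists 0%VS; split; first by move=> v; rewrite memv0 => /eqP ->.
  by left.
case: h2 => [hd|h2]; last by exists U; split=> //; right.
case: (classic (forall v, P v -> v \in U)) => [hall|]; first by exists U; split => //; right.
move=> /not_all_ex_not [v hv]; have [Pv vU] := imply_to_and _ _ hv.
exists (U + <[v]>)%VS; split.
  move=> x /memv_addP [y yU [z /vlineP [k ->] ->]].
  by rewrite addrC; apply: Plin => //; apply: h1.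
left; apply: leq_ltn_trans hd _.
rewrite (ltn_leqif (dimv_leqif_sup (addvSl U <[v]>))).
apply/negP => /subvP h; apply: vU; apply: h.
by have := memv_add (mem0v U) (memv_line v); rewrite add0r.
Qed.

Section Good.
Variable (K : numFieldType) (n : nat).
Local Notation N := n.+1.
Local Notation M := 'M[K]_N.
Local Notation V := 'cV[K]_N.
Local Notation J := (Jmat K N).
Hypothesis hJT : J^T = - J.
Variable L : {vspace M}.
Hypothesis Lsub : lie_subalgebra L.
Hypothesis Lsp : forall X, X \in L -> is_sp X.
Hypothesis Lirr : irreducible_action L.


Lemma irr_pred (P : V -> Prop) : P 0 -> (forall k x y, P x -> P y -> P (k *: x + y)) ->
  (forall A v, A \in L -> P v -> P (A *m v)) -> forall w, w != 0 -> P w -> forall v, P v.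
Proof.
move=> P0 Plin Pst w wn0 Pw v.
have [U hU] := vspace_of_pred P0 Plin.
have [U0|Uf] := Lirr (U := U) (fun A v AL vU => (proj2 (hU _)) (Pst A v AL ((proj1 (hU _)) vU))).
  by case/negP: wn0; rewrite -memv0 -U0; apply/hU.
by apply/hU; rewrite Uf memvf.
Qed.


Lemma two_neq0 (c : K) : c != 0 -> c + c != 0.
Proof. by move=> hc; rewrite -mulr2n mulrn_eq0 negb_or /=. Qed.

Lemma TT_self_comm X w : X \in L -> TT w w \in L -> TT w (X *m w) \in L.
Proof.
move=> XL ww.
have E : comm X (TT w w) = (1 + 1 : K) *: TT w (X *m w).
  rewrite comm_TT; last by apply: Lsp.
  by rewrite scalerDl scale1r TTC.
have -> : TT w (X *m w) = (1 + 1 : K)^-1 *: comm X (TT w w).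
  by rewrite E scalerA mulVf ?scale1r // two_neq0 // oner_neq0.
by apply: memvZ; apply: Lsub.
Qed.

Lemma good_all w u : TT w w \in L -> TT u u \in L -> TT u w \in L -> om u w != 0 ->
  forall a b, TT a b \in L.
Proof.
move=> ww uu uw cn0.
set c := om u w.
have hTu : forall a, TT w a \in L -> TT u a \in L.
  move=> a ha.
  have E : comm (TT u u) (TT w a) = (c + c) *: TT u a + (om u a + om u a) *: TT w u.
    rewrite comm_TT; last by apply: Lsp.
    rewrite !TT_apply !TTDl !TTDr !TTZl !TTZr -/c.
    by rewrite !scalerDl.
  have -> : TT u a = (c + c)^-1 *: (comm (TT u u) (TT w a) - (om u a + om u a) *: TT w u).
    by rewrite E addrK scalerA mulVf ?scale1r // two_neq0.
  apply: memvZ; apply: memvB; first exact: Lsub.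
  by apply: memvZ; rewrite TTC.
have hab : forall a b, TT w a \in L -> TT w b \in L -> TT a b \in L.
  move=> a b ha hb.
  have E : comm (TT w a) (TT u b) = om a u *: TT w b + om w u *: TT a b
      + om a b *: TT u w + om w b *: TT u a.
    rewrite comm_TT; last by apply: Lsp.
    rewrite !TT_apply !TTDl !TTDr !TTZl !TTZr.
    by rewrite !addrA.
  have wu0 : om w u != 0 by rewrite (omA hJT) oppr_eq0.
  have -> : TT a b = (om w u)^-1 *: (comm (TT w a) (TT u b) - om a u *: TT w b
      - om a b *: TT u w - om w b *: TT u a).
    rewrite E; move: (TT w b) (TT a b) (TT u w) (TT u a) => A B C D.
    by apply/matrixP => i j; rewrite !mxE; field; exact: wu0.
  apply: memvZ; apply: memvB; [apply: memvB; [apply: memvB|]|].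
  - exact: Lsub ha (hTu _ hb).
  - exact: memvZ hb.
  - exact: memvZ uw.
  - by apply: memvZ; apply: hTu.
have wn0 : w != 0.
  by apply: contraNneq cn0 => ->; rewrite /om mulmx0 mxE.
have P0 : TT w 0 \in L by rewrite /TT trmx0 mulmx0 !mul0mx addr0 mem0v.
have Plin : forall k x y, TT w x \in L -> TT w y \in L -> TT w (k *: x + y) \in L.
  by move=> k x y hx hy; rewrite TTDr TTZr memvD // memvZ.
have Pst : forall A v, A \in L -> TT w v \in L -> TT w (A *m v) \in L.
  move=> A v AL hv.
  have -> : TT w (A *m v) = comm A (TT w v) - TT (A *m w) v.
    by rewrite (comm_TT _ _ (Lsp AL)) addrAC subrr add0r.
  apply: memvB; first exact: Lsub.
  by apply: hab => //; apply: TT_self_comm.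
have allP := irr_pred (P := fun v => TT w v \in L) P0 Plin Pst wn0 ww.
by move=> a b; apply: hab.
Qed.


Lemma commDr X A B : comm X (A + B) = comm X A + comm X B :> M.
Proof. by rewrite /comm mulmxDr mulmxDl opprD addrACA. Qed.

Lemma good_step w X : TT w w \in L -> X \in L -> om (X *m w) w != 0 ->
  forall a b, TT a b \in L.
Proof.
move=> ww XL cn0; set u := X *m w; set c := om u w.
have uw : TT u w \in L by rewrite TTC; apply: TT_self_comm.
set h := TT u w; set z := X *m u.
have YL : comm X h \in L by exact: Lsub.
have EY : comm X h = TT z w + TT u u by rewrite (comm_TT _ _ (Lsp XL)).
have hw : h *m w = c *: w by rewrite TT_apply (om_xx hJT) scale0r add0r.
have hu : h *m u = (- c) *: u by rewrite TT_apply (om_xx hJT) scale0r addr0 (omA hJT).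
have hz : TT (h *m z) w \in L.
  by rewrite TT_apply TTDl !TTZl memvD // memvZ.
have E : c *: comm X h - comm h (comm X h) + TT (h *m z) w = (c + c + c) *: TT u u.
  rewrite EY commDr !(comm_TT _ _ (Lsp uw)) hw hu TTZl TTZr TTZr.
  move: (TT z w) (TT u u) (TT (h *m z) w) => A B C.
  by apply/matrixP => i j; rewrite !mxE; ring.
have c3 : c + c + c != 0.
  by rewrite -mulr2n -mulrSr mulrn_eq0 negb_or cn0.
have uu : TT u u \in L.
  have -> : TT u u = (c + c + c)^-1 *: (c *: comm X h - comm h (comm X h) + TT (h *m z) w).
    by rewrite E scalerA mulVf ?scale1r.
  by rewrite memvZ // memvD // memvB // ?memvZ //; apply: Lsub.
exact: (good_all ww uu uw cn0).
Qed.

Hypothesis hJJ : J *m J = - 1%:M.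

Lemma all_sp : (forall a b, TT a b \in L) -> forall X, is_sp X -> X \in L.
Proof.
move=> hall X spX.
have key : forall B : M, (B + B^T) *m J \in L.
  move=> B.
  have -> : (B + B^T) *m J = \sum_i \sum_j B i j *: TT (delta_mx i 0) (delta_mx j 0).
    rewrite {1 2}[B]matrix_sum_delta linear_sum /= -big_split /= mulmx_suml.
    apply: eq_bigr => i _; rewrite linear_sum /= -big_split /= mulmx_suml.
    apply: eq_bigr => j _; rewrite linearZ /= trmx_delta -scalerDr -scalemxAl.
    congr (_ *: _); rewrite /TT !trmx_delta !mul_delta_mx mulmxDl.
    done.
  by apply: memv_suml => i _; apply: memv_suml => j _; apply: memvZ.
set B := - (X *m J).
have h1 : J *m X^T = - (X *m J).
  have e1 : X^T *m J = - (J *m X) by apply: spT.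
  have : J *m (X^T *m J) *m J = J *m (- (J *m X)) *m J by rewrite e1.
  rewrite -!mulmxA hJJ mulmxN mulmx1 mulmxN mulNmx mulmxN !mulmxA hJJ.
  by rewrite !mulNmx mul1mx opprK => h; rewrite -h opprK.
have BT : B^T = B by rewrite /B linearN /= trmx_mul hJT mulNmx opprK h1.
have BJ : B *m J = X by rewrite /B mulNmx -mulmxA hJJ mulmxN mulmx1 opprK.
have -> : X = (1 + 1 : K)^-1 *: ((B + B^T) *m J).
  by rewrite BT mulmxDl BJ -{2 3}[X]scale1r -scalerDl scalerA mulVf ?scale1r // two_neq0 // oner_neq0.
exact: memvZ.
Qed.


Lemma rank1_TT A : is_sp A -> \rank A = 1%N ->
  exists w : V, w != 0 /\ exists k : K, TT w w = k *: A.
Proof.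
move=> spA rA.
pose e0 : V := delta_mx 0 0.
have pid1 : pid_mx 1 = e0 *m e0^T :> M.
  rewrite /e0 trmx_delta mul_delta_mx.
  apply/matrixP => i j; rewrite !mxE; congr (_%:R).
  by rewrite -!val_eqE /=; case: i j => [[|i] ?] [[|j] ?] //=; rewrite andbF.
have [a [b Aab]] : exists a b : V, A = a *m b^T.
  exists (col_ebase A *m e0), ((row_ebase A)^T *m e0).
  by rewrite trmx_mul trmxK !mulmxA -(mulmxA _ e0) -pid1 -rA mulmx_ebase.
have A0 : A != 0 by apply/eqP => A0; move: rA; rewrite A0 mxrank0.
have an0 : a != 0 by apply: contraNneq A0 => a0; rewrite Aab a0 mul0mx.
have bn0 : b != 0 by apply: contraNneq A0 => b0; rewrite Aab b0 trmx0 mulmx0.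
pose c := J *m a.
have cn0 : c != 0.
  apply: contraNneq an0 => c0; rewrite -[a]mul1mx -[1%:M]opprK -hJJ mulNmx -mulmxA.
  by rewrite -/c c0 mulmx0 oppr0.
have E1 : b *m c^T = c *m b^T.
  have h := spT spA; rewrite Aab trmx_mul trmxK in h.
  by rewrite /c trmx_mul hJT !mulmxN mulmxA h opprK mulmxA.
have cdef : c = J *m a by []. clearbody c.
have [i [j cij]] := matrix0Pn _ cn0.
have j0 : j = 0 by apply: ord1.
subst j.
pose ei : V := delta_mx i 0.
have E2 : c i 0 *: b = b i 0 *: c.
  have := congr1 (mulmx^~ ei) E1; rewrite -!mulmxA !mx11_mul.
  by rewrite /ei -!colE !mxE => ->.
have E3 : b = (b i 0 / c i 0) *: c by rewrite mulrC -scalerA -E2 scalerA mulVf ?scale1r.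
set l := b i 0 / c i 0 in E3 *.
have ln0 : l != 0 by apply: contraNneq bn0 => l0; rewrite E3 l0 scale0r.
exists a; split=> //; exists (- (l^-1 + l^-1)).
have E4 : A = - l *: (a *m a^T *m J).
  by rewrite Aab E3 linearZ /= -scalemxAr cdef trmx_mul hJT mulmxA mulmxN scaleNr scalerN.
rewrite E4 scalerA mulrN mulNr opprK mulrDl mulVf // scalerDl scale1r.
done.
Qed.

End Good.


Lemma pascal_sum (K : numFieldType) (U : lmodType K) (F : nat -> U) m :
  \sum_(j < m.+1) 'C(m, j)%:R *: (F j.+1 + F j) =
  \sum_(j < m.+2) 'C(m.+1, j)%:R *: F j.
Proof.
rewrite [RHS]big_ord_recl /= bin0 scale1r.
under [in RHS]eq_bigr do rewrite /bump leq0n add1n binS natrD scalerDl.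
rewrite [in RHS]big_split /=.
under eq_bigr do rewrite scalerDr.
rewrite big_split /= [X in _ = _ + X]addrC addrCA; congr (_ + _).
rewrite big_ord_recl /= bin0 scale1r; congr (_ + _).
rewrite [RHS]big_ord_recr /= bin_small // scale0r addr0.
by apply: eq_bigr => i _; rewrite /bump leq0n add1n.
Qed.

Lemma IE_sum (K : comNzRingType) (T : finType) (f : T -> T) :
  \sum_(E : {set T}) (-1) ^+ #|~: E| * ([forall j, f j \in E]%:R : K) =
  [forall i, [exists j, f j == i]]%:R.
Proof.
pose G i : K := if [exists j, f j == i] then 0 else -1.
have := @bigA_distr K 0 1 *%R +%R T (fun _ => 1) G.
have -> : \prod_(i : T) (1 + G i) = [forall i, [exists j, f j == i]]%:R.
  case hall: [forall i, [exists j, f j == i]].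
    by apply: big1 => i _; rewrite /G (forallP hall) addr0.
  move/negbT: hall; rewrite negb_forall => /existsP [i0 hi0].
  by rewrite (bigD1 i0) //= /G (negbTE hi0) subrr mul0r.
move=> ->; apply: eq_bigr => E _.
case hin: [forall j, f j \in E].
  move/forallP: hin => hin; rewrite mulr1 -prodr_const.
  rewrite [RHS](bigID (fun i => i \in E)) /= [X in _ = X * _]big1 ?mul1r; last by move=> i ->.
  apply: eq_big => [i|i]; first by rewrite in_setC.
  rewrite in_setC => hiE; rewrite (negbTE hiE) /G; case: existsP => // [[j /eqP fj]].
  by move: (hin j); rewrite fj (negbTE hiE).
move/negbT: hin; rewrite negb_forall => /existsP [j hj].
rewrite mulr0 (bigD1 (f j)) //= (negbTE hj) /G.
by case: existsP => [_|[]]; [rewrite mul0r | exists j].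
Qed.

Section Bad.
Variable (K : numFieldType) (n : nat).
Local Notation N := n.+1.
Local Notation M := 'M[K]_N.
Local Notation V := 'cV[K]_N.
Local Notation J := (Jmat K N).
Hypothesis hJT : J^T = - J.
Hypothesis hJJ : J *m J = - 1%:M.

Lemma commZr (X A : M) (k : K) : comm X (k *: A) = k *: comm X A.
Proof. by rewrite /comm -scalemxAr -scalemxAl scalerBr. Qed.

Lemma comm0r (X : M) : comm X 0 = 0.
Proof. by rewrite /comm mulmx0 mul0mx subr0. Qed.

Lemma comm_sum (X : M) I (r : seq I) (P : pred I) (F : I -> M) :
  comm X (\sum_(i <- r | P i) F i) = \sum_(i <- r | P i) comm X (F i).
Proof. exact: (big_morph _ (commDr X) (comm0r X)). Qed.

Lemma mulX (Z : M) j (x : V) : Z *m (Z ^+ j *m x) = Z ^+ j.+1 *m x.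
Proof. by rewrite exprS mulmxA. Qed.

Lemma ad_binom (Z : M) (a b : V) m : is_sp Z ->
  iter m (comm Z) (a *m b^T *m J) =
  \sum_(j < m.+1) 'C(m, j)%:R *: ((Z ^+ j *m a) *m (Z ^+ (m - j) *m b)^T *m J).
Proof.
move=> spZ; elim: m => [|m IH].
  by rewrite big_ord1 /= bin0 scale1r !expr0 !mul1mx.
rewrite iterS IH comm_sum.
under eq_bigr => j _.
  rewrite commZr comm_half // !mulX -(subSn (ltn_ord j)) -[(m - j)%N]subSS.
  over.
exact: (pascal_sum (fun j => (Z ^+ j *m a) *m (Z ^+ (m.+1 - j) *m b)^T *m J)).
Qed.


Lemma om_addl (x y z : V) : om (x + y) z = om x z + om y z.
Proof. by rewrite /om linearD /= !mulmxDl mxE. Qed.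

Lemma om_scalel k (x z : V) : om (k *: x) z = k * om x z.
Proof. by rewrite /om linearZ /= -!scalemxAl mxE. Qed.

Lemma om_0l (z : V) : om 0 z = 0.
Proof. by rewrite /om trmx0 !mul0mx mxE. Qed.

Lemma om_suml I (r : seq I) (P : pred I) (F : I -> V) z :
  om (\sum_(i <- r | P i) F i) z = \sum_(i <- r | P i) om (F i) z.
Proof. exact: (big_morph (fun x => om x z) (fun x y => om_addl x y z) (om_0l z)). Qed.

Variable L : {vspace M}.
Hypothesis Lsub : lie_subalgebra L.
Hypothesis Lsp : forall X, X \in L -> is_sp X.
Variable w : V.
Hypothesis ww : TT w w \in L.
Hypothesis bad : forall X, X \in L -> om (X *m w) w = 0.

Definition phi (B : M) : K := om (B *m w) w.

Lemma phiD A B : phi (A + B) = phi A + phi B.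
Proof. by rewrite /phi mulmxDl om_addl. Qed.

Lemma phiZ k A : phi (k *: A) = k * phi A.
Proof. by rewrite /phi -scalemxAl om_scalel. Qed.

Lemma phi0 : phi 0 = 0.
Proof. by rewrite /phi mul0mx om_0l. Qed.

Lemma phi_sum I (r : seq I) (P : pred I) (F : I -> M) :
  phi (\sum_(i <- r | P i) F i) = \sum_(i <- r | P i) phi (F i).
Proof. exact: (big_morph phi phiD phi0). Qed.

Lemma iter_comm_L Z m Y : Z \in L -> Y \in L -> iter m (comm Z) Y \in L.
Proof. by move=> ZL YL; elim: m => //= m IH; apply: Lsub. Qed.

Lemma iter_comm_D Z m (A B : M) :
  iter m (comm Z) (A + B) = iter m (comm Z) A + iter m (comm Z) B.
Proof. by elim: m => //= m ->; rewrite commDr. Qed.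

Lemma pow_vanish Z k : Z \in L -> (forall i, (i < k)%N -> phi (Z ^+ i) = 0) ->
  phi (Z ^+ k) = 0.
Proof.
move=> ZL low.
have YL := iter_comm_L (k + k) ZL ww.
have := bad YL; rewrite /TT iter_comm_D !(ad_binom _ _ _ (Lsp ZL)).
rewrite mulmxDl om_addl => /eqP; rewrite -mulr2n mulrn_eq0 /= => /eqP.
rewrite mulmx_suml om_suml.
under eq_bigr => j _.
  rewrite -scalemxAl om_scalel -!mulmxA mx11_mul -scalemxAr om_scalel !mulmxA.
  rewrite -[om (Z ^+ j *m w) w]/(phi (Z ^+ j)) -[((Z ^+ _ *m w)^T *m _ *m w) 0 0]/(phi (Z ^+ (k + k - j))).
  over.
have kk : (k < (k + k).+1)%N by rewrite ltnS leq_addr.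
rewrite (bigD1 (Ordinal kk)) //= big1 ?addr0; last first.
  move=> j; rewrite -(inj_eq val_inj) /= => jk.
  case: (ltngtP j k) => [jlt|jgt|e]; first by rewrite (low j jlt) !mulr0.
    by rewrite low ?mul0r ?mulr0 //; have := ltn_ord j; lia.
  by rewrite e eqxx in jk.
rewrite addKn => /eqP; rewrite !mulf_eq0 pnatr_eq0 -[('C(_, _) == 0)%N]negbK -lt0n bin_gt0 leq_addr /=.
by rewrite orbb => /eqP.
Qed.


Definition wprod (s : seq M) : M := \prod_(x <- s) x.
Definition allL (s : seq M) := all (fun X => X \in L) s.
Definition Hlow k := forall s, allL s -> (size s < k)%N -> phi (wprod s) = 0.

Lemma swap_eq k : Hlow k -> forall a b X Y, allL (a ++ X :: Y :: b) ->
  size (a ++ X :: Y :: b) = k ->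
  phi (wprod (a ++ X :: Y :: b)) = phi (wprod (a ++ Y :: X :: b)).
Proof.
move=> hl a b X Y hall hs.
have E : wprod (a ++ X :: Y :: b) = wprod (a ++ Y :: X :: b) + wprod (a ++ comm X Y :: b).
  rewrite /wprod !big_cat !big_cons /= /comm !mulmxE mulrBl mulrBr !mulrA.
  by rewrite addrC subrK.
rewrite E phiD (hl (a ++ comm X Y :: b)) ?addr0 //.
  move: hall; rewrite /allL !all_cat /= => /andP [-> /and3P [XL YL ->]].
  by rewrite Lsub.
by move: hs; rewrite !size_cat /= => <-; rewrite ltn_add2l.
Qed.

Lemma move_eq k : Hlow k -> forall t1 p x t2, allL (p ++ x :: t1 ++ t2) ->
  size (p ++ x :: t1 ++ t2) = k ->
  phi (wprod (p ++ x :: t1 ++ t2)) = phi (wprod (p ++ t1 ++ x :: t2)).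
Proof.
move=> hl; elim=> [//|y t1 IH] p x t2 hall hs /=.
rewrite (swap_eq hl) //= -[p ++ y :: _]cat_rcons -[p ++ y :: _]cat_rcons IH //.
  by move: hall; rewrite /allL !all_cat all_rcons /= !andbA; case/andP => /andP [/andP [-> ->] ->] ->.
by move: hs; rewrite !size_cat size_rcons /= addnS.
Qed.

Lemma perm_phi k : Hlow k -> forall s p t, allL (p ++ s) -> size (p ++ s) = k ->
  perm_eq s t -> phi (wprod (p ++ s)) = phi (wprod (p ++ t)).
Proof.
move=> hl; elim=> [|x s IH] p t hall hs.
  by move=> /perm_size /esym /size0nil ->.
move=> hp; have xt : x \in t by rewrite -(perm_mem hp) mem_head.
case/splitPr: xt hp => t1 t2 hp.
have hp2 : perm_eq s (t1 ++ t2).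
  by rewrite -(perm_cons x); apply: (perm_trans hp); rewrite -cat1s perm_catCA.
rewrite -cat_rcons (IH _ (t1 ++ t2)) ?cat_rcons; [|exact: hall|exact: hs|exact: hp2].
apply: (move_eq hl).
- move: hall; rewrite /allL !all_cat /= => /andP [-> /andP [-> hs']].
  by rewrite -(perm_all _ hp2).
- by rewrite -hs !size_cat /= (perm_size hp2).
Qed.

Lemma size_ie k : size (index_enum 'I_k) = k.
Proof. by rewrite /index_enum unlock -enumT size_enum_ord. Qed.

Lemma prod_ie k (F : 'I_k -> M) : \prod_(j < k) F j = wprod (map F (index_enum 'I_k)).
Proof. by rewrite /wprod big_map. Qed.

Lemma polar k : Hlow k -> (forall Z, Z \in L -> phi (Z ^+ k) = 0) ->
  forall X : 'I_k -> M, (forall i, X i \in L) -> phi (\prod_(j < k) X j) = 0.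
Proof.
move=> hl hpow X XL.
have h1 : forall E : {set 'I_k}, phi (\prod_(j < k) \sum_(i in E) X i) = 0.
  move=> E; rewrite big_const_ord iter_mulr_1.
  by apply: hpow; apply: memv_suml => i _; exact: XL.
pose phf (f : {ffun 'I_k -> 'I_k}) := phi (\prod_(j < k) X (f j)).
have h3 : \sum_(E : {set 'I_k}) (-1) ^+ #|~: E| * phi (\prod_(j < k) \sum_(i in E) X i) = 0.
  by rewrite big1 // => E _; rewrite h1 mulr0.
have h4 : \sum_(E : {set 'I_k}) (-1) ^+ #|~: E| * phi (\prod_(j < k) \sum_(i in E) X i)
    = \sum_(f : {ffun 'I_k -> 'I_k}) phf f * [forall i, [exists j, f j == i]]%:R.
  under eq_bigr => E _ do rewrite bigA_distr_big phi_sum big_distrr /= big_mkcond /=.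
  rewrite exchange_big /=; apply: eq_bigr => f _.
  rewrite -IE_sum big_distrr /=; apply: eq_bigr => E _.
  have -> : (f \in ffun_on (fun i => i \in E)) = [forall j, f j \in E].
    by apply/ffun_onP/forallP.
  by case: [forall j, f j \in E]; rewrite ?mulr0 ?mulr1 // mulrC.
rewrite h4 in h3.
set phi0 := phi (\prod_(j < k) X j).
have hs : forall f : {ffun 'I_k -> 'I_k}, [forall i, [exists j, f j == i]] -> phf f = phi0.
  move=> f /forallP hsurj.
  rewrite /phf /phi0 !prod_ie.
  have eqm : index_enum 'I_k =i map f (index_enum 'I_k).
    move=> x; rewrite mem_index_enum; case/existsP: (hsurj x) => j /eqP <-.
    by rewrite map_f // mem_index_enum.
  have pm : perm_eq (map f (index_enum 'I_k)) (index_enum 'I_k).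
    apply: uniq_perm; last by move=> x; rewrite eqm.
    - by rewrite (uniq_size_uniq (index_enum_uniq _) eqm) size_map.
    - exact: index_enum_uniq.
  have := perm_phi hl (s := map (fun j => X (f j)) (index_enum (ordinal k))) (p := [::])
    (t := map X (index_enum 'I_k)).
  rewrite /=; apply.
  - by rewrite /allL all_map; apply/allP => j _; exact: XL.
  - by rewrite size_map size_ie.
  - by rewrite (map_comp X f); apply: perm_map.
have h5 : \sum_(f : {ffun 'I_k -> 'I_k}) phf f * [forall i, [exists j, f j == i]]%:R =
    \sum_(f : {ffun 'I_k -> 'I_k} | [forall i, [exists j, f j == i]]) phi0.
  rewrite [RHS]big_mkcond /=; apply: eq_bigr => f _.
  by case: ifP => [/hs ->|_]; rewrite ?mulr1 ?mulr0.
rewrite h5 in h3.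
have cpos : (0 < #|[pred f : {ffun 'I_k -> 'I_k} | [forall i, [exists j, f j == i]]]|)%N.
  apply/card_gt0P; exists [ffun j => j]; rewrite inE; apply/forallP => i.
  by apply/existsP; exists i; rewrite ffunE.
move: h3; rewrite (eq_bigl (fun f => f \in [pred f : {ffun 'I_k -> 'I_k} | [forall i, [exists j, f j == i]]])) //.
rewrite sumr_const => /eqP; rewrite mulrn_eq0 eqn0Ngt cpos /=.
by move/eqP.
Qed.

Lemma wprod_nseq i Z : wprod (nseq i Z) = Z ^+ i.
Proof. by rewrite /wprod big_nseq iter_mulr_1. Qed.

Lemma all_vanish : forall k s, allL s -> size s = k -> phi (wprod s) = 0.
Proof.
elim/ltn_ind => k IH.
have hl : Hlow k by move=> s hs hsz; apply: (IH (size s)).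
have hpow : forall Z, Z \in L -> phi (Z ^+ k) = 0.
  move=> Z ZL; apply: (pow_vanish ZL) => i ilt.
  rewrite -wprod_nseq; apply: (IH i ilt); last by rewrite size_nseq.
  by rewrite /allL all_nseq ZL orbT.
move=> s hs hsz.
have -> : wprod s = \prod_(j < k) nth 0 s j.
  by rewrite /wprod (big_nth 0) hsz big_mkord.
apply: (polar hl hpow) => i; apply: (allP hs); apply: mem_nth; rewrite hsz //.
Qed.

Lemma bad_false : w != 0 -> irreducible_action L -> False.
Proof.
move=> wn0 Lirr.
pose P v := forall s, allL s -> om (wprod s *m v) w = 0.
have P0 : P 0 by move=> s _; rewrite mulmx0 om_0l.
have Plin : forall k x y, P x -> P y -> P (k *: x + y).
  by move=> k x y hx hy s hs; rewrite mulmxDr -scalemxAr om_addl om_scalel hx ?hy ?mulr0 ?addr0.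
have Pst : forall A v, A \in L -> P v -> P (A *m v).
  move=> A v AL hv s hs; rewrite mulmxA.
  have -> : wprod s *m A = wprod (rcons s A).
    by rewrite /wprod -cats1 big_cat big_seq1.
  by apply: hv; rewrite /allL all_rcons AL.
have Pw : P w by move=> s hs; exact: (all_vanish hs erefl).
have allP := irr_pred Lirr P0 Plin Pst wn0 Pw.
have Jw : J *m w = 0.
  apply/matrixP => i j; rewrite (ord1 j) [RHS]mxE.
  have := allP (delta_mx i 0) [::] isT.
  by rewrite /wprod big_nil mul1mx /om trmx_delta -mulmxA -rowE mxE.
move/negP: wn0; apply; apply/eqP.
by rewrite -[w]mul1mx -[1%:M]opprK -hJJ mulNmx -mulmxA Jw mulmx0 oppr0.
Qed.
End Bad.


Lemma main_gen (K : numFieldType) n (L : {vspace 'M[K]_n.+1}) :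
  (Jmat K n.+1)^T = - Jmat K n.+1 -> Jmat K n.+1 *m Jmat K n.+1 = - 1%:M ->
  lie_subalgebra L -> (forall X, X \in L -> is_sp X) -> irreducible_action L ->
  (exists A, A \in L /\ \rank A = 1%N) -> forall X, is_sp X -> X \in L.
Proof.
move=> hJT hJJ Lsub Lsp Lirr [A [AL rA]].
have [w [wn0 [k Ek]]] := rank1_TT hJT hJJ (Lsp _ AL) rA.
have ww : TT w w \in L by rewrite Ek memvZ.
case: (classic (exists X, X \in L /\ om (X *m w) w != 0)) => [[X [XL hX]]|hno].
  apply: (all_sp hJT hJJ) => //.
  exact: (good_step hJT Lsub Lsp Lirr ww XL hX).
exfalso; apply: (bad_false hJJ Lsub Lsp ww _ wn0 Lirr).
move=> X XL; apply/eqP; apply: contra_notT hno => hX.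
by exists X.
Qed.


Lemma Jmat_tr (K : fieldType) N : (0 < N./2)%N -> (Jmat K N)^T = - Jmat K N.
Proof.
move=> h0; apply/matrixP => i j; rewrite !mxE.
case: (eqVneq (i : nat) (j + N./2)%N) => e1; case: (eqVneq (j : nat) (i + N./2)%N) => e2 //=.
- lia.
- by rewrite opprK.
- by rewrite oppr0.
Qed.

Lemma Jmat_sq (K : fieldType) N : ~~ odd N -> Jmat K N *m Jmat K N = - 1%:M.
Proof.
move=> ev; set h := N./2.
have hN : N = (h + h)%N by rewrite -[LHS]odd_double_half (negbTE ev) add0n -addnn.
apply/matrixP => i k; rewrite !mxE -/h.
have ilt := ltn_ord i.
have klt := ltn_ord k.
have -> : (1 *- (i == k) : K) = if (i : nat) == k then -1 else 0.
  by rewrite -(inj_eq val_inj) /=; case: (_ == _); rewrite ?mulr1n ?mulr0n ?oppr0.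
case: (ltnP i h) => ih.
  have j0lt : (i + h < N)%N by lia.
  rewrite (bigD1 (Ordinal j0lt)) //= big1 ?addr0; last first.
    move=> j; rewrite -(inj_eq val_inj) /= => jn.
    rewrite !mxE -/h (negbTE jn); case: eqP => [?|_]; first lia.
    by rewrite mul0r.
  rewrite !mxE -/h /= eqxx mul1r.
  case: eqP => [?|_]; first lia.
  case: (eqVneq (i + h)%N (k + h)%N) => e.
    by rewrite (_ : (i : nat) == k) //; apply/eqP; lia.
  by rewrite (_ : ((i : nat) == k) = false) //; apply/eqP; lia.
have j0lt : (i - h < N)%N by lia.
rewrite (bigD1 (Ordinal j0lt)) //= big1 ?addr0; last first.
  move=> j; rewrite -(inj_eq val_inj) /= => /eqP jn; have jlt := ltn_ord j.
  rewrite !mxE -/h; case: eqP => [?|_]; first lia.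
  case: eqP => [?|_]; first lia.
  by rewrite mul0r.
rewrite !mxE -/h /=; case: eqP => [?|_]; first lia.
rewrite (_ : ((i : nat) == (i - h) + h)%N) ?mulN1r; last by apply/eqP; lia.
case: eqP => [e|ne].
  by rewrite (_ : (i : nat) == k) //; apply/eqP; lia.
case: eqP => [?|_]; first lia.
by rewrite (_ : ((i : nat) == k) = false) ?oppr0 //; apply/eqP; lia.
Qed.

Lemma main_N (K : numFieldType) N (L : {vspace 'M[K]_N}) :
  (0 < N)%N -> ~~ odd N ->
  lie_subalgebra L -> (forall X, X \in L -> is_sp X) -> irreducible_action L ->
  (exists A, A \in L /\ \rank A = 1%N) -> forall X, is_sp X -> X \in L.
Proof.
case: N L => [//|n] L _ ev.
apply: main_gen; last exact: Jmat_sq.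
apply: Jmat_tr; move: ev; case: n {L} => [//|n] _ /=.
by [].
Qed.


Theorem theorem3p3 :
  exists g0 : nat,
  forall (R : realType) (g : nat) (L : {vspace 'M[complex R]_(4 * g - 4)}),
    (g0 <= g)%N ->
    lie_subalgebra L ->
    lie_semisimple L ->
    (forall X, X \in L -> is_sp X) ->
    (forall X : 'M[complex R]_(2 * (g - 5)), is_sp X -> emb (4 * g - 4) X \in L) ->
    irreducible_action L ->
    (exists A, A \in L /\ nilpotent_mx A /\ \rank A = 1%N) ->
    forall X, X \in L <-> is_sp X.
Proof.
exists 2%N => R g L hg Lsub _ Lsp _ Lirr [A [AL [_ rA]]] X; split; first exact: Lsp.
apply: (main_N (K := complex R)) => //.
- by lia.
- by rewrite (_ : (4 * g - 4 = (2 * g - 2).*2)%N) ?odd_double //; rewrite -addnn; lia.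
- by exists A.
Qed.
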